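(* Let a natural gas network be given by a connected directed graph with node set $\{1,\dots,N\}$ and edge set $\{1,\dots,E\}$ (no self-loops, no parallel edges), with node-edge incidence matrix $A\in\mathbb{R}^{N\times E}$, and let $B\in\mathbb{R}^{N\times E}$, $\gamma_{1}\in\mathbb{R}^{E}$, $\gamma_{2}\in\mathbb{R}^{E\times N}$, $\gamma_{3}\in\mathbb{R}^{E\times E}$, $\delta\in\mathbb{R}^{N}$ be given. Fix a reference node $\mathrm{r}$ and a reference value $\mathring{\pi}_{\mathrm{r}}\in\mathbb{R}$. Define $\hat{\gamma}_{2}=A\gamma_{2}\in\mathbb{R}^{N\times N}$, $\hat{\gamma}_{3}=B+A\gamma_{3}\in\mathbb{R}^{N\times E}$, and assume that the matrix $\hat{\gamma}_{2\backslash\mathrm{r}}$ obtained from $\hat{\gamma}_{2}$ by deleting its $\mathrm{r}$-th row and $\mathrm{r}$-th column is invertible. Let $\breve{\gamma}_{2}\in\mathbb{R}^{N\times N}$ be the matrix whose $\mathrm{r}$-th row and $\mathrm{r}$-th column are zero and whose remaining entries form $\hat{\gamma}_{2\backslash\mathrm{r}}^{-1}$ (i.e., $(\breve{\gamma}_{2})_{ij}=(\hat{\gamma}_{2\backslash\mathrm{r}}^{-1})_{ij}$ for $i,j\neq\mathrm{r}$, indices of the reduced matrix inherited from the original ones). Define $\grave{\gamma}_{2}=\gamma_{2}\breve{\gamma}_{2}\in\mathbb{R}^{E\times N}$ and $\grave{\gamma}_{3}=\gamma_{2}\breve{\gamma}_{2}\hat{\gamma}_{3}-\gamma_{3}\in\mathbb{R}^{E\times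 E}$. Let nominal quantities $\vartheta\in\mathbb{R}^{N}$, $\kappa\in\mathbb{R}^{E}$, $\varphi\in\mathbb{R}^{E}$, $\pi\in\mathbb{R}^{N}$ satisfy $A\varphi=\vartheta-B\kappa-\delta$, $\varphi=\gamma_{1}+\gamma_{2}\pi+\gamma_{3}\kappa$ and $\pi_{\mathrm{r}}=\mathring{\pi}_{\mathrm{r}}$, and let $\alpha\in\mathbb{R}^{N\times N}$, $\beta\in\mathbb{R}^{E\times N}$. Consider the affine control policies $\tilde{\vartheta}(\xi)=\vartheta+\alpha\xi$, $\tilde{\kappa}(\xi)=\kappa+\beta\xi$ and random extractions $\tilde{\delta}(\xi)=\delta+\xi$, $\xi\in\mathbb{R}^{N}$. Suppose functions $\tilde{\pi}:\mathbb{R}^{N}\to\mathbb{R}^{N}$ and $\tilde{\varphi}:\mathbb{R}^{N}\to\mathbb{R}^{E}$ satisfy, for every $\xi\in\mathbb{R}^{N}$, $$A\tilde{\varphi}(\xi)=\tilde{\vartheta}(\xi)-B\tilde{\kappa}(\xi)-\tilde{\delta}(\xi),\qquad \tilde{\varphi}(\xi)=\gamma_{1}+\gamma_{2}\tilde{\pi}(\xi)+\gamma_{3}\tilde{\kappa}(\xi),\qquad \tilde{\pi}_{\mathrm{r}}(\xi)=\mathring{\pi}_{\mathrm{r}}.$$ Then for every $\xi\in\mathbb{R}^{N}$, $$\tilde{\pi}(\xi)=\pi+\breve{\gamma}_{2}(\alpha-\hat{\gamma}_{3}\beta-I_{N})\xi,\qquad \tilde{\varphi}(\xi)=\varphi+\big(\grave{\gamma}_{2}(\alpha-I_{N})-\grave{\gamma}_{3}\beta\big)\xi,$$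 where $I_N$ is the $N\times N$ identity matrix.
   Context: The node-edge incidence matrix is defined by: for each edge $\ell=(n,n')$ directed from sending node $n$ to receiving node $n'$, $A_{n\ell}=+1$, $A_{n'\ell}=-1$, and $A_{k\ell}=0$ for all other nodes $k$. $\vartheta$ are gas injections, $\kappa$ pressure regulation rates of compressors/valves, $\varphi$ gas flow rates, $\pi$ squared nodal pressures, $\delta$ mean gas extractions and $\xi$ the forecast error of extractions. The equation $\varphi=\gamma_{1}+\gamma_{2}\pi+\gamma_{3}\kappa$ is a linearization of the Weymouth gas flow equation around a stationary point; $\gamma_1,\gamma_2,\gamma_3$ are treated as given constants. The matrix $B$ maps pressure regulation of active pipelines to fuel gas extraction at their sending nodes. *)

(* Defs.v *)
From HB Require Import structures.
From mathcomp Require Import all_boot all_order all_algebra.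
From mathcomp Require Import reals.
Set Implicit Arguments. Unset Strict Implicit. Unset Printing Implicit Defensive.
Import Order.TTheory GRing.Theory Num.Theory.
Local Open Scope ring_scope.

(* A directed graph with N nodes 'I_N and E edges 'I_E is given by the sending
   node src l and receiving node dst l of each edge l. *)

Definition incidence (R : pzRingType) (N E : nat) (src dst : 'I_E -> 'I_N)
  : 'M[R]_(N, E) :=
  \matrix_(k < N, l < E)
    (if k == src l then 1 else if k == dst l then -1 else 0).

Definition und_adj (N E : nat) (src dst : 'I_E -> 'I_N) : rel 'I_N :=
  fun u v => [exists l, ((src l == u) && (dst l == v)) || ((src l == v) && (dst l == u))].

Definition graph_connected (N E : nat) (src dst : 'I_E -> 'I_N) : Prop :=
  forall u v : 'I_N, connect (und_adj src dst) u v.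

Definition no_self_loops (N E : nat) (src dst : 'I_E -> 'I_N) : Prop :=
  forall l, src l != dst l.

Definition no_parallel_edges (N E : nat) (src dst : 'I_E -> 'I_N) : Prop :=
  injective (fun l => (src l, dst l)).

Definition del_rc (R : Type) (n : nat) (r : 'I_n.+1) (M : 'M[R]_n.+1) : 'M[R]_n :=
  row' r (col' r M).

Definition breve (R : comUnitRingType) (n : nat) (r : 'I_n.+1) (M : 'M[R]_n.+1)
  : 'M[R]_n.+1 :=
  \matrix_(i, j)
    match unlift r i, unlift r j with
    | Some i', Some j' => invmx (del_rc r M) i' j'
    | _, _ => 0
    end.

(* Main.v *)
Require Import Defs.
From HB Require Import structures.
From mathcomp Require Import all_boot all_order all_algebra.
From mathcomp Require Import reals.
From mathcomp Require Import ring.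
Import Order.TTheory GRing.Theory Num.Theory.
Ltac mxring := apply/matrixP => ? ?; rewrite !mxE; ring.
Local Open Scope ring_scope.

Lemma breve_solve (R : comUnitRingType) (n : nat) (r : 'I_n.+1) (M : 'M[R]_n.+1)
  (d y : 'cV[R]_n.+1) :
  del_rc r M \in unitmx -> M *m d = y -> d r 0 = 0 ->
  d = breve r M *m y.
Proof.
move=> Mu Md dr.
have Hd' : del_rc r M *m row' r d = row' r y.
  apply/matrixP => i k; rewrite (ord1 k) {k} !mxE -Md !mxE (bigD1_ord r) //= dr mulr0 add0r.
  by apply: eq_bigr => j _; rewrite /del_rc !mxE.
have Hd : row' r d = invmx (del_rc r M) *m row' r y by rewrite -Hd' mulKmx.
apply/matrixP => i k; rewrite (ord1 k) {k} !mxE (bigD1_ord r) //= mxE unlift_none.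
case: unliftP => [i'|] ->; last first.
  rewrite mul0r add0r dr big1 // => j _; by rewrite mxE unlift_none mul0r.
rewrite mul0r add0r.
have := congr1 (fun m : 'cV_n => m i' 0) Hd; rewrite !mxE => ->.
by apply: eq_bigr => j _; rewrite !mxE !liftK.
Qed.

Arguments breve_solve {R n r M d y}.

Theorem lemma1 (R : realType) (n E : nat) (src dst : 'I_E -> 'I_n.+1)
  (B : 'M[R]_(n.+1, E)) (g1 : 'cV[R]_E) (g2 : 'M[R]_(E, n.+1)) (g3 : 'M[R]_E)
  (delta : 'cV[R]_n.+1) (r : 'I_n.+1) (pir : R) :
  no_self_loops src dst ->
  no_parallel_edges src dst ->
  graph_connected src dst ->
  let A : 'M[R]_(n.+1, E) := incidence R src dst in
  let g2hat := A *m g2 in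
  let g3hat := B + A *m g3 in
  del_rc r g2hat \in unitmx ->
  let g2breve := breve r g2hat in
  let g2grave := g2 *m g2breve in
  let g3grave := g2 *m g2breve *m g3hat - g3 in
  forall (theta : 'cV[R]_n.+1) (kappa phi : 'cV[R]_E) (pi : 'cV[R]_n.+1)
         (alpha : 'M[R]_n.+1) (beta : 'M[R]_(E, n.+1)),
  A *m phi = theta - B *m kappa - delta ->
  phi = g1 + g2 *m pi + g3 *m kappa ->
  pi r 0 = pir ->
  forall (pit : 'cV[R]_n.+1 -> 'cV[R]_n.+1) (phit : 'cV[R]_n.+1 -> 'cV[R]_E),
  (forall xi : 'cV[R]_n.+1,
     let thetat := theta + alpha *m xi in
     let kappat := kappa + beta *m xi in
     let deltat := delta + xi in
     [/\ A *m phit xi = thetat - B *m kappat - deltat,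
         phit xi = g1 + g2 *m pit xi + g3 *m kappat
       & pit xi r 0 = pir]) ->
  forall xi : 'cV[R]_n.+1,
    pit xi = pi + g2breve *m (alpha - g3hat *m beta - 1%:M) *m xi /\
    phit xi = phi + (g2grave *m (alpha - 1%:M) - g3grave *m beta) *m xi.
Proof.
move=> _ _ _ A g2hat g3hat Hu g2breve g2grave g3grave theta kappa phi pi alpha beta
  H1 H2 H3 pit phit H xi.
have [E1 E2 E3] := H xi.
set d := pit xi - pi.
have Hdiff : phit xi - phi = g2 *m d + g3 *m (beta *m xi).
  rewrite E2 H2 /d mulmxBr mulmxDr.
  move: (g2 *m pit xi) (g2 *m pi) (g3 *m kappa) (g3 *m (beta *m xi)) => a b c e.
  mxring.
have Hd : g2hat *m d = (alpha - g3hat *m beta - 1%:M) *m xi.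
  have : A *m (phit xi - phi) = alpha *m xi - B *m (beta *m xi) - xi.
    rewrite mulmxBr E1 H1 mulmxDr.
    move: (alpha *m xi) (B *m (beta *m xi)) (B *m kappa) => a b c.
    mxring.
  rewrite Hdiff mulmxDr => h.
  rewrite /g3hat -mulmxA !mulmxBl mul1mx !mulmxDl -!mulmxA.
  move: h.
  move: (A *m (g2 *m d)) (A *m (g3 *m (beta *m xi))) (alpha *m xi) (B *m (beta *m xi)) => a b c e h.
  have -> : a = c - e - xi - b by rewrite -h addrK.
  mxring.
have dr : d r 0 = 0 by rewrite /d !mxE E3 H3 subrr.
have Hb := breve_solve Hu Hd dr.
have P1 : pit xi = pi + g2breve *m (alpha - g3hat *m beta - 1%:M) *m xi.
  by rewrite -mulmxA -Hb /d addrC subrK.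
split=> //.
have -> : phit xi = phi + (phit xi - phi) by rewrite addrC subrK.
congr (_ + _); rewrite Hdiff Hb /g2grave /g3grave /g3hat.
rewrite /g2breve !(mulmxBr, mulmxDr, mulmxBl, mulmxDl, mulmxA, mulmx1, mulNmx, mulmxN).
move: (g2 *m breve r g2hat *m alpha *m xi) (g2 *m breve r g2hat *m xi)
  (g2 *m breve r g2hat *m B *m beta *m xi)
  (g2 *m breve r g2hat *m A *m g3 *m beta *m xi) (g3 *m beta *m xi) => a b c e f.
mxring.
Qed.
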